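(* Let $p$ be a prime, let $G$ be a cyclic group of order $p$, and let $S$ be an unsplittable minimal zero-sum sequence over $G$. Let $g\in G$, let $x\in[2,p-1]$ be an integer and $k\ge 3$ an integer, and suppose $T=g^k(xg)^2$ is a subsequence of $S$. Then $|\Sigma(T)|\ge 2|T|$. Moreover, unless $T=g^k\big(\frac{p+3}{2}g\big)^2$, one has $|\Sigma(T)|\ge 2|T|+1$.
   Context: A sequence over $G$ is a finite unordered list of elements of $G$ with repetition allowed, written multiplicatively; $g^k$ denotes $k$ copies of $g$, $xg$ is the $x$-fold multiple of $g$, $|T|$ is the length, $\sigma(T)$ the sum of terms, and $\operatorname{supp}(T)$ the set of elements occurring. $T$ is a subsequence of $S$ if each element occurs in $T$ at most as often as in $S$. $\Sigma(T)$ is the set of sums $\sigma(U)$ over all subsequences $U$ of $T$ with $|U|\ge 1$. $S$ is a minimal zero-sum sequence if $\sigma(S)=0$ and no subsequence $U$ with $1\le|U|<|S|$ has $\sigma(U)=0$. A minimal zero-sum sequence $S$ is unsplittable if there do not exist $h\in\operatorname{supp}(S)$ and $y,z\in G$ with $y+z=h$ such that the sequence obtained from $S$ by replacing one copy of $h$ with the two terms $y,z$ is again a minimal zero-sum sequence. *)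

(* Defs.v *)
(* Sequences over a finite abelian group G are modelled as
   lists [seq G], considered up to permutation (multisets). *)
From HB Require Import structures.
From mathcomp Require Import all_boot all_order all_algebra.
Set Implicit Arguments. Unset Strict Implicit. Unset Printing Implicit Defensive.
Import GRing.Theory.
Local Open Scope ring_scope.

Section ZeroSum.
Variable G : finZmodType.

Definition subseqm (T S : seq G) : Prop :=
  forall a : G, (count_mem a T <= count_mem a S)%N.

Definition sigma (T : seq G) : G := \sum_(a <- T) a.

Definition Sigma (T : seq G) : {set G} :=
  [set y | [exists I : {set 'I_(size T)},
              (I != set0) && ((\sum_(i in I) nth 0 T i) == y)]].

Definition minimal_zero_sum (S : seq G) : Prop :=
  sigma S = 0 /\
  forall U : seq G, subseqm U S -> (1 <= size U)%N -> (size U < size S)%N ->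
    sigma U <> 0.

Definition unsplittable (S : seq G) : Prop :=
  minimal_zero_sum S /\
  ~ exists (h y z : G), [/\ h \in S, y + z = h &
                          minimal_zero_sum (y :: z :: rem h S)].
End ZeroSum.

(* Main.v *)
Require Import Defs.
From HB Require Import structures.
From mathcomp Require Import all_boot all_order all_algebra.
From mathcomp Require Import zify.
Import GRing.Theory.
Local Open Scope ring_scope.

Set Implicit Arguments. Unset Strict Implicit.
Section Gen.
Variable G : finZmodType.
Implicit Types (s t S R U : seq G) (a b c : G).

Lemma sigma_nil : sigma (G:=G) [::] = 0.
Proof. by rewrite /sigma big_nil. Qed.
Lemma sigma_cons a s : sigma (a :: s) = a + sigma s.
Proof. by rewrite /sigma big_cons. Qed.
Lemma sigma_cat s t : sigma (s ++ t) = sigma s + sigma t.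
Proof. by rewrite /sigma big_cat. Qed.
Lemma sigma_nseq n a : sigma (nseq n a) = a *+ n.
Proof. by elim: n => [|n IH]; rewrite ?sigma_nil // /= sigma_cons IH mulrS. Qed.
Lemma sigma_perm s t : perm_eq s t -> sigma s = sigma t.
Proof. by move=> h; rewrite /sigma (perm_big _ h). Qed.

Lemma subseqm_size U S : subseqm U S -> (size U <= size S)%N.
Proof.
move=> /count_subseqP [s hs hp]; rewrite (perm_size hp); exact: size_subseq.
Qed.

Lemma min_use S U : minimal_zero_sum S -> subseqm U S -> (1 <= size U)%N ->
  (size U < size S)%N -> sigma U = 0 -> False.
Proof. by move=> [_ h] hU h1 h2 h0; exact: (h U hU h1 h2 h0). Qed.

Lemma subseq_consP s y r : subseq s (y :: r) ->
  (exists s', s = y :: s' /\ subseq s' r) \/ subseq s r.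
Proof.
case: s => [|x s'] /=; first by right; rewrite sub0seq.
case: eqP => [-> h|_ h]; first by left; exists s'.
by right.
Qed.

Lemma splitA S a b c (j : nat) :
  minimal_zero_sum S -> b \in S -> a + c = b -> c = a *+ j.-1 ->
  (1 <= j.-1 <= count_mem a (rem b S))%N ->
  minimal_zero_sum (a :: c :: rem b S).
Proof.
move=> hmin bS hac hc /andP[hj1 hj2].
set R := rem b S.
have pS : perm_eq S (b :: R) by exact: perm_to_rem.
have cnt e : count_mem e S = ((b == e) + count_mem e R)%N.
  by rewrite (permP pS).
have szS : size S = (size R).+1 by rewrite (perm_size pS).
have sR : sigma R = - b.
  have := hmin.1; rewrite (sigma_perm pS) sigma_cons => /eqP.
  by rewrite addrC addr_eq0 => /eqP.
have RS U : (forall e, count_mem e U <= count_mem e R)%N -> subseqm U S.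
  by move=> h e; rewrite cnt; apply: leq_trans (h e) _; apply: leq_addl.
have C3 t : (forall e, count_mem e t <= count_mem e R)%N -> a + sigma t = 0 -> False.
  move=> ht hat.
  have [t' st' pt'] := (count_subseqP t R).1 ht.
  have [s3 p3] := perm_to_subseq st'.
  have cR e : count_mem e R = (count_mem e t' + count_mem e s3)%N.
    by rewrite (permP p3) count_cat.
  have sR' : sigma R = sigma t' + sigma s3 by rewrite (sigma_perm p3) sigma_cat.
  have szR : size R = (size t' + size s3)%N by rewrite (perm_size p3) size_cat.
  have st : sigma t' = sigma t by rewrite (sigma_perm pt').
  case: (boolP (a \in s3)) => ha.
    apply: (min_use hmin (U := a :: t')).
    - have h3 : (0 < count_mem a s3)%N by rewrite -has_count has_pred1.
      apply: RS => e; rewrite /= cR.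
      case: eqP => [<-|_] /=; [by rewrite addnC leq_add2l | by rewrite add0n leq_addr].
    - by [].
    - have : (0 < size s3)%N by case: (s3) ha.
      by rewrite szS szR /=; lia.
    - by rewrite sigma_cons st.
  have c0 : count_mem a s3 = 0%N by apply/count_memPn.
  apply: (min_use hmin (U := s3 ++ nseq j.-1 a)).
  - apply: RS => e; rewrite count_cat count_nseq cR.
    case: (eqVneq a e) => [<-|ne] /=.
      by rewrite eqxx mul1n c0 add0n addn0; move: hj2; rewrite cR c0 addn0.
    by rewrite (negbTE ne) mul0n addn0 leq_addl.
  - by rewrite size_cat size_nseq; lia.
  - have : (count_mem a t' <= size t')%N by apply: count_size.
    move: hj2; rewrite cR c0 szS szR size_cat size_nseq; set u1 := size s3; set u2 := size t'; set u3 := count_mem a t'; lia.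
  - rewrite sigma_cat sigma_nseq -hc.
    have ht0 : sigma t = - a by apply/eqP; rewrite -addr_eq0 addrC hat.
    have h : - a + sigma s3 = - b by rewrite -ht0 -st -sR'.
    by rewrite -[sigma s3](addNKr a) h addrAC hac subrr.
have sS' : sigma (a :: c :: R) = 0 by rewrite !sigma_cons sR addrA hac subrr.
split=> // U hU hU1 hU2 hU0.
have [s ss ps] := (count_subseqP U (a :: c :: R)).1 hU.
have szU : size U = size s by rewrite (perm_size ps).
have sgU : sigma s = 0 by rewrite -(sigma_perm ps).
rewrite szU in hU1 hU2; rewrite /= in hU2.
have hsR u : subseq u R -> forall e, (count_mem e u <= count_mem e R)%N.
  by move=> hu e; apply: leq_count_subseq.
case: (subseq_consP ss) => [[s1 [E0 ss1]] | ss2].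
  subst s.
  case: (subseq_consP ss1) => [[s2 [E1 ss3]] | ss3].
    subst s1.
    apply: (min_use hmin (U := b :: s2)).
    - move=> e; rewrite cnt /= leq_add2l; exact: leq_count_subseq.
    - by [].
    - move: hU2; rewrite szS /=; set u := size s2; lia.
    - by rewrite sigma_cons -hac -addrA -sigma_cons -sigma_cons.
  by apply: (C3 s1 (hsR _ ss3)); rewrite -sigma_cons.
case: (subseq_consP ss2) => [[s2 [ E ss3]] | ss3].
  have [s3 p3] := perm_to_subseq ss3.
  apply: (C3 s3).
    by move=> e; rewrite (permP p3) count_cat leq_addl.
  have e1 : sigma R = sigma s2 + sigma s3 by rewrite (sigma_perm p3) sigma_cat.
  have e2 : c + sigma s2 = 0 by rewrite -sigma_cons -E.
  have e3 : sigma s2 = - c by apply/eqP; rewrite -addr_eq0 addrC e2.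
  move: e1; rewrite sR e3 => e1.
  by rewrite -[sigma s3](addNKr c) -e1 addrA hac subrr.
apply: (min_use hmin (U := s)) => //.
- move=> e; rewrite cnt; apply: leq_trans (leq_count_subseq _ ss3) (leq_addl _ _).
- have := size_subseq ss3; rewrite szS; set u := size s; set v := size R; lia.
Qed.
End Gen.

Lemma mem_Sigma (G : finZmodType) (T : seq G) (m : bitseq) :
  size m = size T -> has id m -> sigma (mask m T) \in Sigma T.
Proof.
move=> sm hm; rewrite inE; apply/existsP.
exists [set i : 'I_(size T) | nth false m i]; apply/andP; split.
  have [i hi hn] := @has_nthP _ _ _ false hm.
  rewrite sm in hi.
  apply/set0Pn; exists (Ordinal hi); by rewrite inE.
rewrite /sigma big_mask; apply/eqP; apply: eq_big => i; first by rewrite inE andbT.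
by rewrite (tnth_nth 0).
Qed.

Lemma mask_nseq (G : eqType) (g : G) k a : (a <= k)%N ->
  mask (nseq a true ++ nseq (k - a) false) (nseq k g) = nseq a g.
Proof.
move=> ak; rewrite -{2}(subnKC ak) nseqD mask_cat ?size_nseq //.
by rewrite mask_true ?size_nseq // mask_false cats0.
Qed.

Lemma sigma_nseq' (G : finZmodType) n (a : G) : sigma (nseq n a) = a *+ n.
Proof. by rewrite /sigma big_nseq; elim: n => //= n ->; rewrite mulrS. Qed.

Lemma mem_Sigma2 (G : finZmodType) (g h : G) k a b : (a <= k)%N -> (b <= 2)%N ->
  (0 < a + b)%N -> g *+ a + h *+ b \in Sigma (nseq k g ++ nseq 2 h).
Proof.
move=> ak b2 ab.
have := @mem_Sigma G (nseq k g ++ nseq 2 h)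
   ((nseq a true ++ nseq (k - a) false) ++ (nseq b true ++ nseq (2 - b) false)).
rewrite mask_cat ?size_cat ?size_nseq ?subnKC // !mask_nseq //.
rewrite /sigma big_cat /= -!/(sigma _).
rewrite !sigma_nseq'; apply => //.
rewrite !has_cat !has_nseq /=.
by rewrite !andbT !andbF /= orbF; case: a ab {ak} => [|a'] //=; rewrite add0n => ->.
Qed.

Lemma Zp_mulrn0 p (pp : prime p) (g : 'Z_p) n : g != 0 -> (g *+ n == 0) = (p %| n)%N.
Proof.
move=> g0; have p1 := prime_gt1 pp.
have ev : val (g *+ n) = ((val g * n) %% p)%N.
  by rewrite Zp_mulrn /=; congr (_ %% _)%N; exact: Zp_cast.
have glt : (val g < p)%N by have := ltn_ord g; rewrite [X in (_ < X)%N -> _]Zp_cast.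
have gpos : (0 < val g)%N by rewrite lt0n; apply: contra g0 => /eqP h; apply/eqP/val_inj.
rewrite -val_eqE /= ev -/(dvdn p _) Euclid_dvdM //.
have -> : (p %| val g)%N = false by apply/negbTE; rewrite gtnNdvd.
by [].
Qed.

Lemma Zp_inj p (pp : prime p) (g : 'Z_p) v w : g != 0 ->
  (0 < v <= p)%N -> (0 < w <= p)%N -> g *+ v = g *+ w -> v = w.
Proof.
move=> g0.
wlog vw : v w / (v <= w)%N.
  move=> H hv hw e; case: (leqP v w) => [h|h]; first exact: H.
  by apply/esym/H => //; apply: ltnW.
move=> hv hw e.
have e2 : g *+ (w - v) = 0.
  by apply/eqP; rewrite -(subrr (g *+ v)) {1}e -mulrnBr.
move/eqP: e2; rewrite Zp_mulrn0 // => d.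
case: (posnP (w - v)) => [z|pz]; first by lia.
have := dvdn_leq pz d; lia.
Qed.

Lemma card_from p (pp : prime p) (g : 'Z_p) (A : {set 'Z_p}) L : g != 0 -> uniq L ->
  (forall v, v \in L -> 0 < v <= p)%N -> (forall v, v \in L -> g *+ v \in A) ->
  (size L <= #|A|)%N.
Proof.
move=> g0 uL hL hA; apply/card_geqP; exists (map (fun v => g *+ v) L); split.
- rewrite map_inj_in_uniq // => v w hv hw; exact: Zp_inj (hL v hv) (hL w hw).
- by rewrite size_map.
- by move=> y /mapP [v hv ->]; apply: hA.
Qed.

Lemma iota_cat_uniq a n (s : seq nat) : (forall v, v \in s -> a + n <= v)%N ->
  uniq s -> uniq (iota a n ++ s).
Proof.
move=> H us; rewrite cat_uniq iota_uniq us andbT /=.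
by apply/hasPn => v /H; rewrite mem_iota; lia.
Qed.
Unset Implicit Arguments.

Theorem lemma2p8 (p : nat) (pr_p : prime p) (S : seq 'Z_p) (g : 'Z_p)
    (x k : nat) :
  unsplittable S ->
  (2 <= x <= p - 1)%N -> (3 <= k)%N ->
  subseqm (nseq k g ++ nseq 2 (g *+ x)) S ->
  let T := nseq k g ++ nseq 2 (g *+ x) in
  (2 * size T <= #|Sigma T|)%N /\
  (~ perm_eq T (nseq k g ++ nseq 2 (g *+ ((p + 3) %/ 2))) ->
     (2 * size T + 1 <= #|Sigma T|)%N).
Proof.
move=> hU hx hk hT T.
have [hmin hns] := hU.
have szT : size T = (k + 2)%N by rewrite /T size_cat !size_nseq.
rewrite szT.
have szS : (k + 2 <= size S)%N by rewrite -szT; exact: subseqm_size hT.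
have p1 := prime_gt1 pr_p.
have hsub a b : (a <= k)%N -> (b <= 2)%N -> subseqm (nseq a g ++ nseq b (g *+ x)) S.
  move=> ak b2 e; apply: leq_trans (hT e); rewrite !count_cat !count_nseq.
  by apply: leq_add; apply: leq_mul.
have hzs a b : (a <= k)%N -> (b <= 2)%N -> (0 < a + b)%N -> (a + b < size S)%N ->
    g *+ (a + x * b) = 0 -> False.
  move=> ak b2 ab abS e.
  apply: (min_use hmin (hsub a b ak b2)).
  - by rewrite size_cat !size_nseq.
  - by rewrite size_cat !size_nseq.
  - by rewrite sigma_cat !sigma_nseq -mulrnA -mulrnDr.
have g0 : g != 0.
  apply/negP => /eqP g0; apply: (hzs 1%N 0%N); try lia.
  by rewrite g0 mul0rn.
have cg : (k <= count_mem g S)%N.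
  by apply: leq_trans (hT g); rewrite count_cat count_nseq /= eqxx mul1n leq_addr.
have ch : (2 <= count_mem (g *+ x) S)%N.
  apply: leq_trans (hT _); rewrite count_cat count_nseq /= eqxx; set u := (_ * k)%N; rewrite /=; lia.
have memS e : (0 < count_mem e S)%N -> e \in S.
  by move=> h; rewrite -has_pred1 has_count.
have gp : g *+ p = 0 by apply/eqP; rewrite Zp_mulrn0 // dvdnn.
have F2 : (x + k < p)%N.
  rewrite ltnNge; apply/negP => h.
  apply: (hzs (p - x)%N 1%N); try lia.
  by rewrite muln1 subnK ?gp //; lia.
have F3 : (k < x)%N.
  rewrite ltnNge; apply/negP => h.
  apply: hns; exists (g *+ x), g, (g *+ (x - 1)); split.
  - by apply: memS; apply: leq_trans ch.
  - by rewrite -mulrS; congr (_ *+ _); lia.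
  - apply: (splitA (j := x)) => //.
    + by apply: memS; apply: leq_trans ch.
    + by rewrite -mulrS; congr (_ *+ _); lia.
    + by rewrite subn1.
    + rewrite count_mem_rem; set u := count_mem g S; case: (_ == _) => /=; lia.
have podd : odd p.
  by case: (even_prime pr_p) => // p2; move: hx; rewrite p2; lia.
have [q pq] : exists q, p = (2 * q + 1)%N.
  exists p./2; have := odd_double_half p; rewrite podd -muln2; lia.
have memv v a b : (a <= k)%N -> (b <= 2)%N -> (0 < a + b)%N ->
    (a + x * b = v \/ a + x * b = v + p)%N -> g *+ v \in Sigma T.
  move=> ak b2 ab e.
  have -> : g *+ v = g *+ a + (g *+ x) *+ b.
    rewrite -mulrnA -mulrnDr; case: e => ->; first by [].
    by rewrite mulrnDr gp addr0.
  exact: mem_Sigma2.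
have [lt2|gt2] : (2 * x < p)%N \/ (p < 2 * x)%N by lia.
  have F5 : (2 * x + k <= p)%N.
    rewrite leqNgt; apply/negP => h.
    apply: (hzs (p - 2 * x)%N 2%N); try lia.
    by have -> : (p - 2 * x + x * 2 = p)%N by lia.
  set L := (iota 1 k ++ iota x k.+1 ++ iota (2 * x) k.+1).
  have hL : uniq L.
    apply: iota_cat_uniq; last apply: iota_cat_uniq; rewrite ?iota_uniq //.
      by move=> v; rewrite mem_cat !mem_iota; lia.
    by move=> v; rewrite !mem_iota; lia.
  have hLp v : v \in L -> (0 < v <= p)%N by rewrite !mem_cat !mem_iota; lia.
  have hLS v : v \in L -> g *+ v \in Sigma T.
    rewrite !mem_cat !mem_iota => /orP [h|/orP [h|h]].
    - apply: (memv v v 0%N); lia.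
    - apply: (memv v (v - x)%N 1%N); lia.
    - apply: (memv v (v - 2 * x)%N 2%N); lia.
  have := card_from pr_p g0 hL hLp hLS.
  rewrite /L !size_cat !size_iota => h; split; [apply: (leq_trans _ h); lia | move=> _; apply: (leq_trans _ h); lia].
have [y1|y3] : (2 * x = p + 1)%N \/ (p + 3 <= 2 * x)%N by lia.
  have e2 : g *+ x + g *+ x = g.
    rewrite -mulrnDr; have -> : (x + x = p + 1)%N by lia.
    by rewrite mulrnDr gp add0r mulr1n.
  exfalso; apply: hns; exists g, (g *+ x), (g *+ x); split => //.
  - by apply: memS; lia.
  - apply: (splitA (j := 2)) => //.
    + by apply: memS; lia.
    + move: ch; rewrite count_mem_rem; set u := count_mem (g *+ x) S; case: (_ == _) => /=; lia.
have [yk|yk] := leqP (2 * x - p) k.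
  set L := (iota 1 (2 * x - p + k) ++ iota x k.+1).
  have hL : uniq L.
    apply: iota_cat_uniq; rewrite ?iota_uniq //.
    by move=> v; rewrite !mem_iota; lia.
  have hLp v : v \in L -> (0 < v <= p)%N by rewrite !mem_cat !mem_iota; lia.
  have hLS v : v \in L -> g *+ v \in Sigma T.
    rewrite !mem_cat !mem_iota => /orP [h|h].
    - case: (leqP v k) => hv.
        apply: (memv v v 0%N); lia.
      apply: (memv v (v - (2 * x - p))%N 2%N); lia.
    - apply: (memv v (v - x)%N 1%N); lia.
  have := card_from pr_p g0 hL hLp hLS.
  rewrite /L !size_cat !size_iota => h; split; first by apply: (leq_trans _ h); lia.
  move=> hne; case: (eqVneq (2 * x) (p + 3)%N) => [e3|ne3]; last by apply: (leq_trans _ h); lia.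
  exfalso; apply: hne.
  have -> : ((p + 3) %/ 2 = x)%N.
    have -> : (p + 3 = x * 2)%N by lia.
    by rewrite mulnK.
  exact: perm_refl.
set L := (iota 1 k ++ iota (2 * x - p) k.+1 ++ iota x k.+1).
have hL : uniq L.
  apply: iota_cat_uniq; last apply: iota_cat_uniq; rewrite ?iota_uniq //.
    by move=> v; rewrite mem_cat !mem_iota; lia.
  by move=> v; rewrite !mem_iota; lia.
have hLp v : v \in L -> (0 < v <= p)%N by rewrite !mem_cat !mem_iota; lia.
have hLS v : v \in L -> g *+ v \in Sigma T.
  rewrite !mem_cat !mem_iota => /orP [h|/orP [h|h]].
  - apply: (memv v v 0%N); lia.
  - apply: (memv v (v - (2 * x - p))%N 2%N); lia.
  - apply: (memv v (v - x)%N 1%N); lia.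
have := card_from pr_p g0 hL hLp hLS.
rewrite /L !size_cat !size_iota => h; split; [apply: (leq_trans _ h); lia | move=> _; apply: (leq_trans _ h); lia].
Qed.
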